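(* The Lie algebra $T^*\mathfrak{su}(2)$ has no 5-dimensional Lie subalgebra. Moreover, if $\mathfrak{h}$ is a 4-dimensional Lie subalgebra of $T^*\mathfrak{su}(2)$ which is degenerate with respect to the canonical quadratic form, then there exists an automorphism $F$ of $\mathfrak{su}(2)$ such that $T^*F(\mathfrak{h})=\mathbb{R}e_1\oplus\mathfrak{su}(2)^*$.
   Context: $(e_1,e_2,e_3)$ is the basis of $\mathfrak{su}(2)$ given by $e_1=\frac12\begin{pmatrix}0&i\\ i&0\end{pmatrix}$, $e_2=\frac12\begin{pmatrix}0&1\\-1&0\end{pmatrix}$, $e_3=\frac12\begin{pmatrix}-i&0\\0&i\end{pmatrix}$, with $[e_1,e_2]=e_3$, $[e_2,e_3]=e_1$, $[e_3,e_1]=e_2$. For a Lie algebra $\mathfrak{g}$, $T^*\mathfrak{g}=\mathfrak{g}\oplus\mathfrak{g}^*$ with bracket $[u+\alpha,v+\beta]=[u,v]+\mathrm{ad}_u^*\beta-\mathrm{ad}_v^*\alpha$, where $(\mathrm{ad}_u^*\alpha)(v)=-\alpha([u,v])$, and canonical quadratic form $\langle u+\alpha,v+\beta\rangle=\alpha(v)+\beta(u)$. For an automorphism $F$ of $\mathfrak{g}$, $T^*F$ is the automorphism $u+\alpha\mapsto F(u)+(F^{-1})^*\alpha$ of $T^*\mathfrak{g}$. A subspace is degenerate if the restriction of the form to it is degenerate. *)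

(* Defs.v *)
From HB Require Import structures.
From mathcomp Require Import all_boot all_order all_algebra.
From mathcomp Require Import reals.
Set Implicit Arguments. Unset Strict Implicit. Unset Printing Implicit Defensive.
Import Order.TTheory GRing.Theory Num.Theory.
Local Open Scope ring_scope.

Section TStar.
Variable R : realType.

Definition i0 : 'I_3 := @Ordinal 3 0 isT.
Definition i1 : 'I_3 := @Ordinal 3 1 isT.
Definition i2 : 'I_3 := @Ordinal 3 2 isT.

(* su(2) in coordinates w.r.t. the basis (e_1,e_2,e_3): u = u0 e1 + u1 e2 + u2 e3.
   Bracket = bilinear extension of [e1,e2]=e3, [e2,e3]=e1, [e3,e1]=e2. *)
Definition su2_br (u v : 'rV[R]_3) : 'rV[R]_3 :=
  \row_(k < 3)
    (if k == i0 then u 0 i1 * v 0 i2 - u 0 i2 * v 0 i1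
     else if k == i1 then u 0 i2 * v 0 i0 - u 0 i0 * v 0 i2
     else u 0 i0 * v 0 i1 - u 0 i1 * v 0 i0).

(* elements of su(2)^* in coordinates w.r.t. the dual basis; evaluation alpha(v) *)
Definition dual_eval (alpha v : 'rV[R]_3) : R := \sum_(i < 3) alpha 0 i * v 0 i.

(* basis vector e_(j+1) *)
Definition ebasis (j : 'I_3) : 'rV[R]_3 := delta_mx 0 j.

Definition coad (u alpha : 'rV[R]_3) : 'rV[R]_3 :=
  \row_(j < 3) (- dual_eval alpha (su2_br u (ebasis j))).

(* T^*su(2) = su(2) (+) su(2)^*, elements u + alpha written row_mx u alpha *)
Definition tstar_br (x y : 'rV[R]_(3 + 3)) : 'rV[R]_(3 + 3) :=
  let u := lsubmx x in let alpha := rsubmx x in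
  let v := lsubmx y in let beta := rsubmx y in
  row_mx (su2_br u v) (coad u beta - coad v alpha).

Definition tstar_form (x y : 'rV[R]_(3 + 3)) : R :=
  dual_eval (rsubmx x) (lsubmx y) + dual_eval (rsubmx y) (lsubmx x).

Definition is_lie_subalg (H : 'M[R]_(3 + 3)) : Prop :=
  forall x y : 'rV[R]_(3 + 3), (x <= H)%MS -> (y <= H)%MS -> (tstar_br x y <= H)%MS.

Definition degenerate (H : 'M[R]_(3 + 3)) : Prop :=
  exists x : 'rV[R]_(3 + 3), [/\ (x <= H)%MS, x != 0 &
    forall y, (y <= H)%MS -> tstar_form x y = 0].

Definition su2_aut (F : 'M[R]_3) : Prop :=
  F \in unitmx /\ forall u v, su2_br (u *m F) (v *m F) = su2_br u v *m F.

(* T^*F (u + alpha) = F(u) + (F^{-1})^* alpha, where ((F^{-1})^* alpha)(w) = alpha(F^{-1} w) *)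
Definition tstarF (F : 'M[R]_3) (x : 'rV[R]_(3 + 3)) : 'rV[R]_(3 + 3) :=
  row_mx (lsubmx x *m F)
         (\row_(j < 3) dual_eval (rsubmx x) (ebasis j *m invmx F)).

End TStar.

(* Main.v *)
Require Import Defs.
From HB Require Import structures.
From mathcomp Require Import all_boot all_order all_algebra.
From mathcomp Require Import reals.
From mathcomp Require Import ring lra zify.
Import Order.TTheory GRing.Theory Num.Theory.
Local Open Scope ring_scope.
Set Implicit Arguments. Unset Strict Implicit.

Section Aux.
Variable R : realType.
Implicit Types u v a b : 'rV[R]_3.

Lemma ord3P (P : 'I_3 -> Prop) : P i0 -> P i1 -> P i2 -> forall k, P k.
Proof.
move=> h0 h1 h2 [[|[|[|//]]] hk].
- by have -> : Ordinal hk = i0 by apply: val_inj.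
- by have -> : Ordinal hk = i1 by apply: val_inj.
- by have -> : Ordinal hk = i2 by apply: val_inj.
Qed.

Lemma eq3 u v : u 0 i0 = v 0 i0 -> u 0 i1 = v 0 i1 -> u 0 i2 = v 0 i2 -> u = v.
Proof.
move=> h0 h1 h2; apply/rowP => k.
by elim/ord3P: k.
Qed.

Lemma sum3 (f : 'I_3 -> R) : \sum_(i < 3) f i = f i0 + f i1 + f i2.
Proof.
rewrite !big_ord_recr big_ord0 /= add0r.
congr (f _ + f _ + f _); exact: val_inj.
Qed.

Lemma br0 u v : su2_br u v 0 i0 = u 0 i1 * v 0 i2 - u 0 i2 * v 0 i1.
Proof. by rewrite mxE. Qed.
Lemma br1 u v : su2_br u v 0 i1 = u 0 i2 * v 0 i0 - u 0 i0 * v 0 i2.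
Proof. by rewrite mxE. Qed.
Lemma br2 u v : su2_br u v 0 i2 = u 0 i0 * v 0 i1 - u 0 i1 * v 0 i0.
Proof. by rewrite mxE. Qed.

Lemma deval a v : dual_eval a v = a 0 i0 * v 0 i0 + a 0 i1 * v 0 i1 + a 0 i2 * v 0 i2.
Proof. by rewrite /dual_eval sum3. Qed.

Lemma eb j k : ebasis R j 0 k = (k == j)%:R.
Proof. by rewrite /ebasis mxE. Qed.

Lemma coad_br u b : coad u b = su2_br u b.
Proof.
apply: eq3; rewrite !mxE !deval !br0 !br1 !br2 !eb /=; ring.
Qed.


Definition mx33 (a b c d e f g h k : R) : 'M[R]_3 :=
  \matrix_(i < 3, j < 3) nth 0 (nth [::] [:: [:: a; b; c]; [:: d; e; f]; [:: g; h; k]] i) j.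

Lemma mulE u (M : 'M[R]_3) j :
  (u *m M) 0 j = u 0 i0 * M i0 j + u 0 i1 * M i1 j + u 0 i2 * M i2 j.
Proof. by rewrite mxE sum3. Qed.

Lemma sqsum0 (x y z : R) : x ^+ 2 + y ^+ 2 + z ^+ 2 = 0 -> [/\ x = 0, y = 0 & z = 0].
Proof.
move=> h.
have hx := sqr_ge0 x; have hy := sqr_ge0 y; have hz := sqr_ge0 z.
have ex : x ^+ 2 = 0 by lra.
have ey : y ^+ 2 = 0 by lra.
have ez : z ^+ 2 = 0 by lra.
by split; apply/eqP; rewrite -sqrf_eq0; apply/eqP.
Qed.

Definition Rz (c s : R) := mx33 c (- s) 0 s c 0 0 0 1.
Definition Ry (c s : R) := mx33 c 0 (- s) 0 1 0 s 0 c.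

Lemma Rz_aut c s : c ^+ 2 + s ^+ 2 = 1 -> su2_aut (Rz c s).
Proof.
move=> hcs; split.
  have [] // := @mulmx1_unit _ _ (Rz c s) (Rz c (- s)).
  apply/matrixP => i j; elim/ord3P: i; elim/ord3P: j;
    rewrite !mxE sum3 !mxE /=; first [ring | rewrite -hcs; ring].
move=> u v; apply: eq3; rewrite !mulE !br0 !br1 !br2 !mulE !mxE /=;
  first [ring | rewrite -hcs; ring].
Qed.

Lemma Ry_aut c s : c ^+ 2 + s ^+ 2 = 1 -> su2_aut (Ry c s).
Proof.
move=> hcs; split.
  have [] // := @mulmx1_unit _ _ (Ry c s) (Ry c (- s)).
  apply/matrixP => i j; elim/ord3P: i; elim/ord3P: j;
    rewrite !mxE sum3 !mxE /=; first [ring | rewrite -hcs; ring].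
move=> u v; apply: eq3; rewrite !mulE !br0 !br1 !br2 !mulE !mxE /=;
  first [ring | rewrite -hcs; ring].
Qed.

Lemma aut_mul (F G : 'M[R]_3) : su2_aut F -> su2_aut G -> su2_aut (F *m G).
Proof.
move=> [uF hF] [uG hG]; split; first by rewrite unitmx_mul uF uG.
by move=> u v; rewrite !mulmxA hG hF.
Qed.

Lemma rot (u0 : 'rV[R]_3) : u0 != 0 ->
  exists F (lam : R), [/\ su2_aut F, lam != 0 & u0 *m F = lam *: ebasis R i0].
Proof.
move=> nz.
set x : R := u0 0 i0; set y : R := u0 0 i1; set z : R := u0 0 i2.
have [r r_ge0 hr2] : exists2 r : R, 0 <= r & r ^+ 2 = x ^+ 2 + y ^+ 2.
  by exists (Num.sqrt (x ^+ 2 + y ^+ 2)); rewrite ?sqrtr_ge0 // sqr_sqrtr // addr_ge0 // sqr_ge0.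
have [F1 [aF1 e1]] : exists F1, su2_aut F1 /\ u0 *m F1 = \row_(k < 3) [:: r; 0; z]`_k.
  have [r0|rn0] := eqVneq r 0.
    have : x ^+ 2 + y ^+ 2 = 0 by rewrite -hr2; subst r; rewrite expr0n.
    have hx := sqr_ge0 x; have hy := sqr_ge0 y => hs.
    have ex : x ^+ 2 = 0 by lra.
    have ey : y ^+ 2 = 0 by lra.
    move/eqP: ex; rewrite sqrf_eq0 => /eqP ex.
    move/eqP: ey; rewrite sqrf_eq0 => /eqP ey.
    exists (Rz 1 0); split; first by apply: Rz_aut; ring.
    apply: eq3; rewrite !mulE !mxE /= -/x -/y -/z ex ey; subst r; ring.
  exists (Rz (x / r) (y / r)); split.
    apply: Rz_aut; rewrite !expr_div_n -mulrDl -hr2 divff //.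
    by rewrite expf_neq0.
  apply: eq3; rewrite !mulE !mxE /= -/x -/y -/z.
  - rewrite (_ : _ + _ = (x ^+ 2 + y ^+ 2) / r); last by field.
    by rewrite -hr2 expr2 mulfK.
  - by field.
  - ring.
have hsum : r ^+ 2 + z ^+ 2 != 0.
  apply/eqP; rewrite hr2 => /sqsum0 [hx hy hz]; move/eqP: nz; apply.
  by apply: eq3; rewrite ?mxE -/x -/y -/z.
have [p p_ge0 hp2] : exists2 p : R, 0 <= p & p ^+ 2 = r ^+ 2 + z ^+ 2.
  by exists (Num.sqrt (r ^+ 2 + z ^+ 2)); rewrite ?sqrtr_ge0 // sqr_sqrtr // addr_ge0 // sqr_ge0.
have pn0 : p != 0 by apply: contraNneq hsum => p0; rewrite -hp2; subst p; rewrite expr0n.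
exists (F1 *m Ry (r / p) (z / p)), p; split => //.
  apply: aut_mul => //; apply: Ry_aut; rewrite !expr_div_n -mulrDl -hp2 divff //.
  by rewrite expf_neq0.
rewrite mulmxA e1; apply: eq3; rewrite !mulE !mxE /=.
- rewrite (_ : _ + _ = (r ^+ 2 + z ^+ 2) / p); last by field.
  by rewrite -hp2 expr2 mulfK // mulr1.
- ring.
- by field.
Qed.


Definition Pl : 'M[R]_(3 + 3, 3) := col_mx 1%:M 0.
Definition Pr : 'M[R]_(3 + 3, 3) := col_mx 0 1%:M.

Lemma mulPl (x : 'rV[R]_(3 + 3)) : x *m Pl = lsubmx x.
Proof. by rewrite -{1}(hsubmxK x) mul_row_col mulmx1 mulmx0 addr0. Qed.
Lemma mulPr (x : 'rV[R]_(3 + 3)) : x *m Pr = rsubmx x.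
Proof. by rewrite -{1}(hsubmxK x) mul_row_col mulmx1 mulmx0 add0r. Qed.

Lemma tbr (x y : 'rV[R]_(3 + 3)) : tstar_br x y =
  row_mx (su2_br (lsubmx x) (lsubmx y))
         (su2_br (lsubmx x) (rsubmx y) - su2_br (lsubmx y) (rsubmx x)).
Proof. by rewrite /tstar_br !coad_br. Qed.

Lemma br_u0 u : su2_br u 0 = 0.
Proof. by apply: eq3; rewrite !mxE; ring. Qed.
Lemma br_0u u : su2_br 0 u = 0.
Proof. by apply: eq3; rewrite !mxE; ring. Qed.

Lemma dotT (w n : 'rV[R]_3) : (w *m n^T) 0 0 = dual_eval w n.
Proof. by rewrite mxE /dual_eval; apply: eq_bigr => i _; rewrite mxE. Qed.

Lemma dot0 (w n : 'rV[R]_3) : (w *m n^T = 0) <-> dual_eval w n = 0.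
Proof.
split => [h|h]; first by rewrite -dotT h mxE.
by apply/rowP => i; rewrite (ord1 i) dotT h mxE.
Qed.

Lemma getnormal m (A : 'M[R]_(m, 3)) : (\rank A <= 2)%N ->
  exists n : 'rV[R]_3, n != 0 /\ A *m n^T = 0.
Proof.
move=> hA.
have : kermx A^T != 0.
  by rewrite -mxrank_eq0 mxrank_ker mxrank_tr; apply/eqP; lia.
case/rowV0Pn => n /sub_kermxP hn nz; exists n; split => //.
by rewrite -[A]trmxK -trmx_mul hn trmx0.
Qed.

Lemma sqsum_neq0 (n : 'rV[R]_3) : n != 0 ->
  n 0 i0 ^+ 2 + n 0 i1 ^+ 2 + n 0 i2 ^+ 2 != 0.
Proof.
move=> nz; apply/eqP => /sqsum0 [h0 h1 h2]; move/eqP: nz; apply.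
by apply: eq3; rewrite ?mxE.
Qed.

Lemma alg1 (b n : 'rV[R]_3) : n != 0 -> dual_eval b n = 0 ->
  (forall k, dual_eval (su2_br (ebasis R k) b) n = 0) -> b = 0.
Proof.
move=> nz hd hk.
have id : (b 0 i0 ^+ 2 + b 0 i1 ^+ 2 + b 0 i2 ^+ 2) *
          (n 0 i0 ^+ 2 + n 0 i1 ^+ 2 + n 0 i2 ^+ 2) =
   dual_eval b n ^+ 2 + dual_eval (su2_br (ebasis R i0) b) n ^+ 2
   + dual_eval (su2_br (ebasis R i1) b) n ^+ 2
   + dual_eval (su2_br (ebasis R i2) b) n ^+ 2.
  by rewrite !deval !br0 !br1 !br2 !eb /=; ring.
move: id; rewrite hd !hk expr0n /= !addr0 => /eqP; rewrite mulf_eq0.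
rewrite (negPf (sqsum_neq0 nz)) orbF => /eqP/sqsum0 [h0 h1 h2].
by apply: eq3; rewrite ?mxE.
Qed.

Lemma alg2 (n : 'rV[R]_3) : n != 0 ->
  (forall i j, dual_eval (su2_br (su2_br (ebasis R i) n) (su2_br (ebasis R j) n)) n = 0) ->
  False.
Proof.
move=> nz h.
have id : (n 0 i0 ^+ 2 + n 0 i1 ^+ 2 + n 0 i2 ^+ 2) ^+ 2 =
  n 0 i0 * dual_eval (su2_br (su2_br (ebasis R i1) n) (su2_br (ebasis R i2) n)) n
  + n 0 i1 * dual_eval (su2_br (su2_br (ebasis R i2) n) (su2_br (ebasis R i0) n)) n
  + n 0 i2 * dual_eval (su2_br (su2_br (ebasis R i0) n) (su2_br (ebasis R i1) n)) n.
  by rewrite !deval !(br0, br1, br2) !eb /=; ring.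
move: id; rewrite !h !mulr0 !addr0 => /eqP; rewrite sqrf_eq0.
by rewrite (negPf (sqsum_neq0 nz)).
Qed.


Section Sub.
Variable H : 'M[R]_(3 + 3).
Hypothesis hH : is_lie_subalg H.
Let U := H *m Pl.
Let Kt := (H :&: kermx Pl)%MS.
Let K3 := Kt *m Pr.

Lemma memU u : (u <= U)%MS -> exists x, (x <= H)%MS /\ lsubmx x = u.
Proof.
case/submxP => D ->; exists (D *m H); split; first exact: submxMl.
by rewrite -mulPl mulmxA.
Qed.

Lemma inU (x : 'rV[R]_(3 + 3)) : (x <= H)%MS -> (lsubmx x <= U)%MS.
Proof. by move=> hx; rewrite -mulPl submxMr. Qed.

Lemma memK b : (row_mx 0 b <= H)%MS -> (b <= K3)%MS.
Proof.
move=> hb; rewrite -(row_mxKr (0 : 'rV[R]_3) b) -mulPr submxMr //.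
by rewrite sub_capmx hb; apply/sub_kermxP; rewrite mulPl row_mxKl.
Qed.

Lemma inKt (v : 'rV[R]_(3 + 3)) : (v <= Kt)%MS -> (v <= H)%MS /\ v = row_mx 0 (rsubmx v).
Proof.
rewrite sub_capmx => /andP [hv /sub_kermxP]; rewrite mulPl => hl.
by split => //; rewrite -hl hsubmxK.
Qed.

Lemma rankPl : \rank Pl = 3%N.
Proof. by rewrite /Pl rank_col_mx0 mxrank1. Qed.

Lemma rankKt : (\rank Kt <= 3)%N.
Proof.
have := mxrankS (capmxSr H (kermx Pl)); rewrite mxrank_ker rankPl.
by [].
Qed.

Lemma Ktfull : \rank Kt = 3%N -> forall b, (row_mx 0 b <= H)%MS.
Proof.
move=> hr b.
have sK : (Kt <= kermx Pl)%MS by exact: capmxSr.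
have : (\rank Kt == \rank (kermx Pl)) by rewrite mxrank_ker rankPl hr.
rewrite (mxrank_leqif_eq sK).2 => /andP [_ sK'].
have hb : (row_mx 0 b <= kermx Pl)%MS by apply/sub_kermxP; rewrite mulPl row_mxKl.
exact: (submx_trans (submx_trans hb sK') (capmxSl _ _)).
Qed.

Lemma L1 : \rank U = 3%N -> (\rank Kt <= 2)%N -> \rank Kt = 0%N.
Proof.
move=> hU hK.
have [n [nz hn]] := getnormal (leq_trans (mxrankM_maxl Kt Pr) hK).
apply/eqP; rewrite mxrank_eq0; apply/rowV0P => v /[dup] hv /inKt [vH ev].
set b := rsubmx v in ev.
have full : row_full U by rewrite /row_full hU.
have hbn : forall w, (w <= K3)%MS -> dual_eval w n = 0.
  by move=> w /submxP [D ->]; apply/dot0; rewrite -mulmxA hn mulmx0.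
suff hb0 : b = 0 by rewrite ev hb0 row_mx0.
apply: (alg1 nz).
  by apply: hbn; apply: memK; rewrite -ev.
move=> k; apply: hbn; apply: memK.
have [x [xH hx]] := memU (submx_full (ebasis R k) full).
have := hH xH vH; rewrite tbr hx ev row_mxKl row_mxKr br_u0 br_0u subr0.
by [].
Qed.

Lemma L2 : \rank U <> 2%N.
Proof.
move=> hU.
have [n [nz hn]] := getnormal (eq_leq hU).
have sUW : (U <= kermx n^T)%MS by apply/sub_kermxP.
have : (\rank U == \rank (kermx n^T)).
  by rewrite mxrank_ker mxrank_tr rank_rV nz hU.
rewrite (mxrank_leqif_eq sUW).2 => /andP [_ sWU].
have inW : forall k, (su2_br (ebasis R k) n <= U)%MS.
  move=> k; apply: (submx_trans _ sWU); apply/sub_kermxP; apply/dot0.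
  by rewrite !deval !(br0, br1, br2) !eb; ring.
apply: (alg2 nz) => i j.
have [x [xH hx]] := memU (inW i).
have [y [yH hy]] := memU (inW j).
have := inU (hH xH yH); rewrite tbr row_mxKl hx hy.
by case/submxP => D ->; apply/dot0; rewrite -mulmxA hn mulmx0.
Qed.

Lemma Lmain : (4 <= \rank H)%N -> \rank Kt = 3%N /\ (\rank U + 3 = \rank H)%N.
Proof.
move=> h4.
have hrk := mxrank_mul_ker H Pl.
have hUle : (\rank U <= 3)%N := rank_leq_col U.
have hKle := rankKt.
have hL2 := L2.
have hL1 := L1.
rewrite -/U -/Kt in hrk.
case: (ltnP (\rank Kt) 3) => hK.
  have hU3 : \rank U = 3%N.
    have : \rank U <> 2%N by [].
    lia.
  have := hL1 hU3 (hK); lia.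
split; lia.
Qed.

End Sub.


Lemma rowdual (a : 'rV[R]_3) (G : 'M[R]_3) :
  \row_j dual_eval a (ebasis R j *m G) = a *m G^T.
Proof.
apply/rowP => j; rewrite !mxE /dual_eval; apply: eq_bigr => i _.
by rewrite /ebasis -rowE !mxE.
Qed.

End Aux.

Unset Implicit Arguments.

Theorem mainTheorem12 (R : realType) :
  (forall H : 'M[R]_(3 + 3), is_lie_subalg H -> \rank H <> 5%N) /\
  (forall H : 'M[R]_(3 + 3), is_lie_subalg H -> \rank H = 4%N -> degenerate H ->
     exists F : 'M[R]_3, su2_aut F /\
       forall y : 'rV[R]_(3 + 3),
         (exists x, (x <= H)%MS /\ y = tstarF F x) <->
         (exists (a : R) (alpha : 'rV[R]_3), y = row_mx (a *: ebasis R i0) alpha)).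
Proof.
split.
  move=> H hH h5.
  have [_ hr] := Lmain hH (ltnW (eq_leq (esym h5))).
  by apply: (L2 hH); move: hr; rewrite h5; lia.
move=> H hH h4 _.
have [hK hr] := Lmain hH (eq_leq (esym h4) : (4 <= \rank H)%N).
have hU : \rank (H *m Pl R) = 1%N by move: hr; rewrite h4; lia.
have allK := Ktfull hK.
have : H *m Pl R != 0 by rewrite -mxrank_eq0 hU.
case/rowV0Pn => u0 u0U nz.
have : (\rank u0 == \rank (H *m Pl R)) by rewrite rank_rV nz hU.
rewrite (mxrank_leqif_eq u0U).2 => /andP [_ Uu0].
have [F [lam [aF lnz eF]]] := rot nz.
exists F; split => // y; split.
  case=> x [xH ->].
  have /sub_rVP [t ht] := submx_trans (inU xH) Uu0.
  exists (t * lam), (\row_j dual_eval (rsubmx x) (ebasis R j *m invmx F)).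
  by rewrite /tstarF ht -scalemxAl eF scalerA.
case=> a [alpha ->].
have [x0 [x0H hx0]] := memU u0U.
set t := a / lam.
exists (row_mx (t *: u0) (alpha *m F^T)); split.
  have -> : row_mx (t *: u0) (alpha *m F^T) =
      t *: x0 + row_mx 0 (alpha *m F^T - t *: rsubmx x0).
    rewrite -{1}(hsubmxK x0) scale_row_mx add_row_mx hx0 addr0.
    by congr row_mx; rewrite addrC subrK.
  by apply: addmx_sub; [apply: scalemx_sub | apply: allK].
rewrite /tstarF row_mxKl row_mxKr rowdual -mulmxA -trmx_mul.
case: aF => uF _.
rewrite mulVmx // trmx1 mulmx1 -scalemxAl eF scalerA /t divfK //.
Qed.
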